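(* Consider the HyperLogLogLog update procedure (described in the context) with $m$ registers, processing a stream containing $n$ distinct elements. For sufficiently large $n$ satisfying $n/(\log_2 n)^2>m^2$, with high probability the updates take amortized constant time, i.e., the total work spent on processing the $n$ distinct elements (including all calls to the compression and rebasing routines) is $O(n)$.
   Context: HyperLogLogLog sketch: parameters $m$ (a power of two), word size $w$, and $\kappa$ (bits per dense register). The uncompressed HyperLogLog registers $M'[j]\in[w]$, $j\in[m]$, are represented by a triple $(S,M,B)$: a base value $B$, a dense array $M$ of $\kappa$-bit offsets, and an associative array $S$ of (index, value) pairs; register $j$ has value $S[j]$ if $j\in S$ and $B+M[j]$ otherwise, and register $j$ is stored densely ($M[j]=M'[j]-B$) iff $B\le M'[j]<B+2^\kappa$, otherwise sparsely in $S$. Initially $S=\emptyset$, $M=0$, $B=0$. Update with element $y$: compute $j=f(y)\in[m]$ and $r=\rho(h(y))$ (the 1-based position of the first one-bit of a random $w$-bit hash value); if $r$ exceeds the current value of register $j$, set register $j$ to $r$ (densely or sparsely according to the rule above) and then call compress. Compress: choose $B'$ maximizing the number of registers $j$ with $B'\le M'[j]<B'+2^\kappa$, trying candidate base values and spending $O(m)$ work per candidate; if $B'\ne B$, rebase, i.e., reassign every register to the dense or sparse representation relative to $B'$ in $O(m)$ work, and set $B\gets B'$. Each update that does not trigger compression costs $O(1)$ work. Elements are hashed by random hash functions (register index uniform in $[m]$, $\rho$-values geometric with $\Pr[\rho=k]=2^{-k}$, independent across distinct elements). ''With high probability'' means with probability at least $1-\beta$ for a fixed constant $\beta\in(0,1)$.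 *)

(* Defs.v *)
From HB Require Import structures.
From mathcomp Require Import all_boot all_order all_algebra.
From mathcomp Require Import all_classical all_reals all_analysis.
Set Implicit Arguments.
Unset Strict Implicit.
Unset Printing Implicit Defensive.
Import Order.TTheory GRing.Theory Num.Theory.

(* rho of a random w-bit hash value: 1-based position of the first one
   bit; for the all-zero word we use the convention rho = w + 1. *)
Definition rho (w : nat) (x : w.-tuple bool) : nat := (index true x).+1.

Definition regs (m : nat) := {ffun 'I_m -> nat}.

Definition set_reg (m : nat) (M : regs m) (j : 'I_m) (r : nat) : regs m :=
  [ffun i => if i == j then r else M i].

(* Number of registers that would be stored densely with base b. *)
Definition window_count (m kappa : nat) (M : regs m) (b : nat) : nat :=
  #|[pred j : 'I_m | (b <= M j) && (M j < b + 2 ^ kappa)]|.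

(* Candidate base values tried by compress: the distinct register
   values (an optimal base can always be taken among them). *)
Definition candidates (m : nat) (M : regs m) : seq nat :=
  undup [seq M j | j <- enum 'I_m].

Definition best_base (m kappa : nat) (M : regs m) (B : nat) : nat :=
  let mx := \max_(b <- candidates M) window_count kappa M b in
  if mx <= window_count kappa M B then B
  else head B [seq b <- candidates M | window_count kappa M b == mx].

(* Cost of one call to compress (in units of elementary work):
   m per tried candidate, plus m for rebasing if B' <> B. *)
Definition compress_cost (m kappa : nat) (M : regs m) (B : nat) : nat :=
  m * size (candidates M) + (if best_base kappa M B != B then m else 0).

(* State: (registers M', base B, accumulated work). The triple (S,M,B)
   of the paper is determined by (M', B): register j is dense iff
   B <= M'[j] < B + 2^kappa. *)
Definition hstate (m : nat) := (regs m * nat * nat)%type.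

Definition hstep (m w kappa : nat) (s : hstate m) (e : 'I_m * w.-tuple bool)
  : hstate m :=
  let: (M, B, W) := s in
  let: (j, x) := e in
  let r := rho x in
  if M j < r then
    let M2 := set_reg M j r in
    (M2, best_base kappa M2 B, W + 1 + compress_cost kappa M2 B)
  else (M, B, W + 1).

Definition hinit (m : nat) : hstate m := ([ffun => 0%N], 0%N, 0%N).

(* Total work spent processing n distinct elements, whose hash values
   (register index, w-bit hash) are given by omega, in stream order. *)
Definition hlll_work (m w kappa n : nat)
  (omega : {ffun 'I_n -> 'I_m * w.-tuple bool}) : nat :=
  (foldl (@hstep m w kappa) (hinit m) [seq omega i | i <- enum 'I_n]).2.

Definition unif_prob (R : numFieldType) (T : finType) (E : pred T) : R :=
  (#|[pred x | E x]|%:R / #|T|%:R)%R.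

(* Main.v *)
Require Import Defs.
From HB Require Import structures.
From mathcomp Require Import all_boot all_order all_algebra.
From mathcomp Require Import all_classical all_reals all_analysis.
From mathcomp Require Import zify ring lra.
Import Order.TTheory GRing.Theory Num.Theory.
Set Implicit Arguments. Unset Strict Implicit. Unset Printing Implicit Defensive.

Definition Qs (m : nat) (M : regs m) : nat := (\sum_(j < m) M j)%N.

Definition Inv (m t k : nat) (s : hstate m) : Prop :=
  (forall j, (s.1.1) j <= t)%N /\ (s.2 <= k + (1 + m * (t + 2)) * Qs (s.1.1))%N.

Lemma size_cand m (M : regs m) t : (forall j, M j <= t)%N ->
  (size (candidates M) <= t.+1)%N.
Proof.
move=> HM; rewrite -(size_iota 0 t.+1); apply: uniq_leq_size.
  exact: undup_uniq.
move=> x; rewrite mem_undup => /mapP [j _ ->].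
by rewrite mem_iota /= add0n ltnS.
Qed.

Lemma Qs_set m (M : regs m) j r : (M j < r)%N -> (Qs M < Qs (set_reg M j r))%N.
Proof.
move=> Hr; rewrite /Qs (bigD1 j) //= [X in (_ < X)%N](bigD1 j) //=.
rewrite /set_reg ffunE eqxx.
have -> : (\sum_(i < m | i != j) [ffun i0 => if i0 == j then r else M i0] i
   = \sum_(i < m | i != j) M i)%N.
  by apply: eq_bigr => i /negbTE Hi; rewrite ffunE Hi.
by rewrite ltn_add2r.
Qed.

Lemma step_inv m w kappa t k (s : hstate m) (e : 'I_m * w.-tuple bool) :
  Inv t k s -> (rho e.2 <= t)%N -> Inv t k.+1 (hstep kappa s e).
Proof.
case: s => [[M B] W]; case: e => [j x] /= [HM HW] Hr.
rewrite /hstep /=.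
case: ifP => Hlt; last first.
  by split => //=; rewrite addn1 addSn ltnS.
have HM2 : forall i, (set_reg M j (rho x) i <= t)%N.
  by move=> i; rewrite /set_reg ffunE; case: ifP.
split => //=.
have Hc := size_cand HM2.
have Hq := Qs_set Hlt.
have Hcc : (compress_cost kappa (set_reg M j (rho x)) B <= m * (t + 2))%N.
  rewrite /compress_cost.
  have : (m * size (candidates (set_reg M j (rho x))) <= m * t.+1)%N by rewrite leq_mul2l Hc orbT.
  case: ifP => _; rewrite ?addn0; nia.
move: Hcc Hq HW; set cc := compress_cost _ _ _; set q2 := Qs (set_reg _ _ _); set q1 := Qs M; move=> Hcc Hq HW; have : ((1 + m * (t + 2)) * q1.+1 <= (1 + m * (t + 2)) * q2)%N by rewrite leq_mul2l Hq orbT.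
rewrite mulnS; move: HW; rewrite /=; lia.
Qed.

Lemma fold_inv m w kappa t (s : seq ('I_m * w.-tuple bool)) k st :
  Inv t k st -> (forall e, e \in s -> rho e.2 <= t)%N ->
  Inv t (k + size s) (foldl (@hstep m w kappa) st s).
Proof.
elim: s k st => [|e s IH] k st Hi Hs /=; first by rewrite addn0.
rewrite addnS -addSn; apply: IH.
  by apply: step_inv => //; apply: Hs; rewrite inE eqxx.
by move=> e' He'; apply: Hs; rewrite inE He' orbT.
Qed.

Lemma work_bound m w kappa n t (omega : {ffun 'I_n -> 'I_m * w.-tuple bool}) :
  (forall i, rho (omega i).2 <= t)%N ->
  (hlll_work kappa omega <= n + (1 + m * (t + 2)) * (m * t))%N.
Proof.
move=> Ho; rewrite /hlll_work.
have H0 : Inv t 0 (hinit m).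
  split => /=; first by move=> j; rewrite ffunE.
  by [].
have := fold_inv kappa H0 (s := [seq omega i | i <- enum 'I_n]).
case/(_ _)/Wrap.
  by move=> e /mapP [i _ ->].
case: (foldl _ _ _) => [[M B] W] [HM HW]; rewrite /= in HM HW.
rewrite size_map size_enum_ord add0n in HW.
have : (Qs M <= m * t)%N.
  apply: (@leq_trans (\sum_(i < m) t)%N); first by apply: leq_sum => i _; apply: HM.
  by rewrite sum_nat_const card_ord.
move=> HQ; apply: leq_trans HW _; rewrite leq_add2l leq_mul2l HQ orbT //.
Qed.
Lemma tcount w t :
  (#|[set x : w.-tuple bool | t <= index true x]| * 2 ^ t <= 2 ^ w)%N.
Proof.
elim: w t => [|w IH] [|t].
- by rewrite muln1; apply: leq_trans (max_card _) _; rewrite card_tuple card_bool.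
- rewrite (_ : [set _ | _] = finset.set0) ?cards0 //.
  apply/setP => x; rewrite !inE; apply/negbTE; rewrite -ltnNge.
  by rewrite ltnS; apply: leq_trans (index_size _ _) _; rewrite size_tuple.
- by rewrite muln1; apply: leq_trans (max_card _) _; rewrite card_tuple card_bool.
- set A := [set x : w.+1.-tuple bool | _].
  set B := [set x : w.-tuple bool | t <= index true x].
  have inj : {in A &, injective (fun x : w.+1.-tuple bool => behead_tuple x)}.
    move=> [[|a x] //= sx] [[|b y] //= sy]; rewrite !inE /= => Hx Hy.
    move/(congr1 val) => /= Hb; apply: val_inj => /=.
    by move: Hx Hy Hb; case: a; case: b => //= _ _ ->.
  have sub : [set behead_tuple x | x in A] \subset B.
    apply/fintype.subsetP => y /imsetP [x]; rewrite !inE => Hx ->.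
    move: Hx; case: x => [[|a x] //= sx]; case: a => //=.
  have := subset_leq_card sub; rewrite card_in_imset // => HAB.
  have := IH t; rewrite -/B !expnS => HB.
  have := leq_mul2r (2 ^ t) #|A| #|B|; rewrite HAB orbT => H2; nia.
Qed.
Lemma card_coord n (A : finType) (i : 'I_n) (P : pred A) :
  (#|[set f : {ffun 'I_n -> A} | P (f i)]| * #|A| = #|P| * #|{ffun 'I_n -> A}|)%N.
Proof.
pose F := fun x : 'I_n => if x == i then P else predT.
have -> : #|[set f : {ffun 'I_n -> A} | P (f i)]| = #|(family F : simpl_pred {ffun 'I_n -> A})|.
  apply: eq_card => f; rewrite inE; apply/idP/familyP => [Hf x|Hf].
    by rewrite /F; case: eqP => [->|].
  by have := Hf i; rewrite /F eqxx.
rewrite card_family card_ffun.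
rewrite foldrE big_map big_enum /= (bigD1 i) //= /F eqxx.
rewrite (eq_bigr (fun _ => #|A|)); last by move=> x /negbTE ->; apply: eq_card.
rewrite prod_nat_const cardC1 card_ord.
case: n i {F} => [[]//|n] i /=. by rewrite expnS mulnCA mulnC.
Qed.

Lemma card_bigcup_le (T I : finType) (F : I -> {set T}) :
  (#|\bigcup_(i : I) F i| <= \sum_(i : I) #|F i|)%N.
Proof.
apply: (big_ind2 (fun (X : {set T}) k => #|X| <= k)%N).
- by rewrite cards0.
- move=> A a B b Ha Hb; apply: leq_trans (leq_card_setU A B).1 _; exact: leq_add.
- by [].
Qed.

Local Open Scope ring_scope.

Theorem lemma3p7 (R : realType) (beta : R) :
  0 < beta < 1 ->
  exists (C N0 : nat),
    forall (m w kappa n : nat),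
      (exists k : nat, m = (2 ^ k)%N) ->
      (N0 <= n)%N ->
      (m%:R ^+ 2 < n%:R / (ln (n%:R : R) / ln (2 : R)) ^+ 2) ->
      1 - beta <=
        unif_prob R (fun omega : {ffun 'I_n -> 'I_m * w.-tuple bool} =>
                       (hlll_work kappa omega <= C * n)%N).
Proof.
move=> /andP [b0 b1].
pose s := (Num.trunc (beta^-1)).+1.
have Hs : 1 <= beta * (2 ^ s)%N%:R.
  have h1 : beta^-1 < s%:R := truncnS_gt _.
  have h2 : (s <= 2 ^ s)%N := ltnW (ltn_expl s (isT : (1 < 2)%N)).
  have h3 : s%:R <= (2 ^ s)%N%:R :> R by rewrite ler_nat.
  have e : beta * beta^-1 = 1 := mulfV (lt0r_neq0 b0).
  move: e h1 h3; set bi := beta^-1; set X := (2 ^ s)%N%:R; move=> e h1 h3; nra.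
exists (1 + 2 * (s + 3) ^ 2)%N, 2%N.
move=> m w kappa n [k ->] Hn Hr.
set mm := (2 ^ k)%N in Hr *.
have mm0 : (0 < mm)%N by rewrite expn_gt0.
clearbody mm.
set tl := trunc_log 2 n.
set t := (tl + 1 + s)%N.
have Hn0 : (0 < n)%N by apply: leq_trans Hn.
have Htl : (2 ^ tl <= n)%N := trunc_logP (ltnSn 1) Hn0.
have Htl2 : (n < 2 ^ tl.+1)%N := trunc_log_ltn _ (ltnSn 1).
have key : ((mm * (t + 1)) ^ 2 <= (s + 3) ^ 2 * n)%N.
  have ln2 : 0 < ln (2:R) by apply: ln_gt0; lra.
  have nR : (2:R) <= n%:R by rewrite (ler_nat R 2 n).
  have lnn : ln (2:R) <= ln (n%:R : R).
    by rewrite ler_ln // posrE; lra.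
  set L := ln (n%:R : R) / ln (2 : R) in Hr *.
  have L1 : 1 <= L by rewrite /L ler_pdivlMr // mul1r.
  have tlL : tl%:R <= L.
    rewrite /L ler_pdivlMr //.
    have : ln ((2 ^ tl)%N%:R : R) <= ln (n%:R : R).
      by rewrite ler_ln ?posrE ?ltr0n ?expn_gt0 // ler_nat.
    rewrite natrX lnXn // mulr_natl; exact: id.
  have tL : (t + 1)%N%:R <= (s + 3)%N%:R * L.
    rewrite /t !natrD; move: tlL L1; set a := tl%:R; set b := s%:R.
    have : 0 <= b by rewrite ler0n.
    move=> *; nra.
  have L0 : 0 < L ^+ 2 by rewrite exprn_gt0 //; lra.
  move: Hr; rewrite ltr_pdivlMr // => Hr.
  rewrite -(ler_nat R) !(natrM, natrX).
  move: tL Hr L0 L1; set x := mm%:R; set y := (t + 1)%N%:R; set z := (s + 3)%N%:R.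
  have : 0 <= x by rewrite ler0n.
  have : 0 <= y by rewrite ler0n.
  move=> hy hx tL Hr L0 L1.
  have h1 : x * y <= x * (z * L) by rewrite ler_wpM2l.
  have h2 : 0 <= x * y by rewrite mulr_ge0.
  have h3 : (x * y) ^+ 2 <= (x * (z * L)) ^+ 2.
    by rewrite ler_pXn2r // ?nnegrE //; apply: le_trans h1.
  have h4 : (x * (z * L)) ^+ 2 = z ^+ 2 * (x ^+ 2 * L ^+ 2) by ring.
  have h5 : z ^+ 2 * (x ^+ 2 * L ^+ 2) <= z ^+ 2 * n%:R.
    by rewrite ler_wpM2l ?exprn_ge0 ?ler0n // ltW.
  rewrite h4 in h3; have := le_trans h3 h5.
  by rewrite !exprMn.
have Hgood : forall omega : {ffun 'I_n -> 'I_mm * w.-tuple bool},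
    (forall i, rho (omega i).2 <= t)%N ->
    (hlll_work kappa omega <= (1 + 2 * (s + 3) ^ 2) * n)%N.
  move=> om Ho; apply: leq_trans (work_bound kappa Ho) _.
  have e1 : (mm * t <= (mm * (t + 1)) ^ 2)%N by nia.
  have e2 : (mm * mm * (t * (t + 2)) <= (mm * (t + 1)) ^ 2)%N by nia.
  nia.
pose A := ('I_mm * w.-tuple bool)%type.
pose F := fun i : 'I_n => [set f : {ffun 'I_n -> A} | (t < rho (f i).2)%N].
pose U := \bigcup_(i : 'I_n) F i.
have cA : #|{: A}| = (mm * 2 ^ w)%N by rewrite card_prod card_ord card_tuple card_bool.
have cA0 : (0 < #|{: A}|)%N by rewrite cA muln_gt0 mm0 expn_gt0.
have hF : forall i, (#|F i| * 2 ^ t <= #|{ffun 'I_n -> A}|)%N.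
  move=> i; have := card_coord i (fun a : A => (t < rho a.2)%N).
  have -> : #|(fun a : A => (t < rho a.2)%N)| =
     #|finset.setX [set: 'I_mm] [set x : w.-tuple bool | (t <= index true x)%N]|.
    apply: eq_card => -[a x]; by rewrite -topredE /= !inE /= ltnS.
  rewrite cardsX cardsT card_ord cA => HF.
  have := tcount w t; set S := #|_| => HS.
  move: HF; set TT := #|{: {ffun 'I_n -> A}}|; set FF := #|_| => HF.
  have cA1 : (0 < mm * 2 ^ w)%N by rewrite -cA.
  rewrite -(leq_pmul2r cA1).
  have -> : (FF * 2 ^ t * (mm * 2 ^ w) = TT * (mm * (S * 2 ^ t)))%N.
    by rewrite mulnAC HF; ring.
  by rewrite !leq_mul2l HS !orbT.
set TT := #|{: {ffun 'I_n -> A}}| in hF *.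
have hU : (#|U| * 2 ^ t <= n * TT)%N.
  apply: (@leq_trans ((\sum_(i < n) #|F i|) * 2 ^ t)%N).
    by rewrite leq_mul2r card_bigcup_le orbT.
  rewrite big_distrl /=; apply: (@leq_trans (\sum_(i < n) TT)%N); first by apply: leq_sum => i _; exact: hF.
  by rewrite sum_nat_const card_ord.
have TT0 : (0 < TT)%N by rewrite /TT card_ffun expn_gt0 cA0.
have hU2 : (#|U| * 2 ^ s <= TT)%N.
  have P0 : (0 < 2 ^ tl.+1)%N by rewrite expn_gt0.
  have e : (2 ^ s * 2 ^ tl.+1 = 2 ^ t)%N by rewrite -expnD /t addn1 addnC.
  rewrite -(leq_pmul2r P0) -mulnA e.
  apply: (leq_trans hU); rewrite mulnC leq_mul2l ltnW ?orbT //.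
have HG : (TT - #|U| <= #|[pred x : {ffun 'I_n -> 'I_mm * w.-tuple bool} |
                   (hlll_work kappa x <= (1 + 2 * (s + 3) ^ 2) * n)%N]|)%N.
  have -> : (TT - #|U| = #|~: U|)%N by rewrite /TT -(cardsC U) addKn.
  apply: subset_leq_card; apply/fintype.subsetP => f; rewrite inE => Hf.
  rewrite inE; apply: Hgood => i; rewrite leqNgt; apply/negP => Hi.
  move/negP: Hf; apply; apply/finset.bigcupP; exists i => //.
  by rewrite /F inE.
rewrite /unif_prob.
move: HG; set G := (X in (_ <= X)%N) => HG.
have hUT : (#|U| <= TT)%N.
  by apply: leq_trans hU2; rewrite leq_pmulr // expn_gt0.
rewrite ler_pdivlMr ?ltr0n //.
have HGr : TT%:R - #|U|%:R <= G%:R :> R by rewrite -natrB // ler_nat.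
have hU2r : #|U|%:R * (2 ^ s)%N%:R <= TT%:R :> R by rewrite -natrM ler_nat.
move: HGr hU2r Hs; set u := #|U|%:R; set T := TT%:R; set p := (2 ^ s)%N%:R; set g := G%:R.
have u0 : 0 <= u by rewrite ler0n.
move=> HGr hU2r Hs.
have h1 : 0 <= (beta * p - 1) * u by rewrite mulr_ge0 // subr_ge0.
have h2 : 0 <= beta * (T - u * p) by rewrite mulr_ge0 ?subr_ge0 // ltW.
nra.
Qed.
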